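(* Let $G$ be a finite graph with maximum degree $\Delta$, with edges ordered $e_1,\ldots,e_m$, let $\gamma>1$ be real, $K=\lceil(2+\gamma)(\Delta-1)\rceil$, and run the Procedure described in the context. Then for each step $i$, the map which assigns to each input prefix $(F_j)_{j\le i}$ (for which steps $1,\ldots,i$ are performed) the output $((R_j)_{j\le i},\Phi_i)$ is injective.
   Context: Procedure. A partial edge-coloring assigns to some edges a color in $\{1,\ldots,K\}$; initially all edges are uncolored. The input is a vector $F$ with entries in $\{1,\ldots,\lceil\gamma(\Delta-1)\rceil\}$. Fix, for every edge $e$ and every $k\ge 3$, an enumeration (e.g. lexicographic) of the cycles of length $2k$ of $G$ containing $e$. At step $i=1,2,\ldots$: if no edge is uncolored, stop. Otherwise let $e_j=uv$ be the uncolored edge of smallest index. Let $S'$ be the set of colors appearing on edges $xy\neq uv$ such that (1) $x=u$ or $x=v$, or (2) edges $ux$ and $vy$ exist and have the same color; let $S=\{1,\ldots,K\}\setminus S'$. Color $e_j$ with the $F_i$-th smallest element of $S$. If this creates a cycle colored with only two colors (it has length $2k\ge 6$), choose one such cycle $C$ by a fixed deterministic rule, write it as $e_{i_1},e_{i_2},\ldots,e_{i_{2k}},e_{i_1}$ (consecutive edges) with $e_{i_1}=e_j$ and $i_2<i_{2k}$, uncolor all edges of $C$ except $e_{i_2}$ and $e_{i_3}$, and set $R_i=(k,\ell)$ where $\ell$ is the index of $C$ in the fixed enumeration of cycles of length $2k$ containing $e_j$. Otherwise $R_i$ is empty. $\Phi_i$ denotes the partial coloring after step $i$. *)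

(* Defs.v *)
From HB Require Import structures.
From mathcomp Require Import all_boot all_order all_algebra.
From mathcomp Require Import reals.
Set Implicit Arguments. Unset Strict Implicit. Unset Printing Implicit Defensive.
Import Order.TTheory GRing.Theory Num.Theory.

Section Procedure.
(* A finite graph on vertex type V whose edges are e_0, ..., e_{m-1}
   (the order of the edges is the order of the indices 'I_m);
   edge i joins the two vertices of [ends i]. *)
Variables (V : finType) (m : nat) (ends : 'I_m -> V * V).

Definition edge_between (i : 'I_m) (x y : V) : bool :=
  (ends i == (x, y)) || (ends i == (y, x)).

Definition incident (i : 'I_m) (x : V) : bool :=
  ((ends i).1 == x) || ((ends i).2 == x).

Definition simple_graph : Prop :=
  (forall i, (ends i).1 != (ends i).2) /\
  (forall i j, edge_between j (ends i).1 (ends i).2 -> i = j).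

Definition degree (v : V) : nat := #|[set i | incident i v]|.
Definition max_degree : nat := \max_(v : V) degree v.

Definition edges_adj (i j : 'I_m) : bool :=
  (i != j) && [exists x, incident i x && incident j x].

(* partial edge-coloring: None = uncolored, Some c = colored with c *)
Definition pcoloring := {ffun 'I_m -> option nat}.

Definition cycle_edges (p : seq V) : {set 'I_m} :=
  [set i | has (fun xy => edge_between i xy.1 xy.2) (zip p (rot 1 p))].

Definition is_cycle (C : {set 'I_m}) (n : nat) : Prop :=
  exists p : seq V,
    [/\ uniq p, size p = n, 3 <= n,
        all (fun xy => [exists i, edge_between i xy.1 xy.2]) (zip p (rot 1 p))
      & C = cycle_edges p].

Definition bichromatic (Phi : pcoloring) (C : {set 'I_m}) : Prop :=
  exists c1 c2 : nat, forall f, f \in C -> Phi f = Some c1 \/ Phi f = Some c2.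

Definition valid_enum (enumC : 'I_m -> nat -> seq {set 'I_m}) : Prop :=
  forall e k, 3 <= k ->
    uniq (enumC e k) /\
    (forall C, C \in enumC e k <-> is_cycle C (2 * k) /\ e \in C).

(* the fixed deterministic rule choosing a two-colored cycle through e *)
Definition valid_rule (rule : pcoloring -> 'I_m -> option {set 'I_m}) : Prop :=
  forall Phi e,
    (forall C, rule Phi e = Some C ->
       [/\ e \in C, exists n, is_cycle C n & bichromatic Phi C]) /\
    (rule Phi e = None ->
       forall C n, is_cycle C n -> e \in C -> ~ bichromatic Phi C).

Definition minpick (P : pred 'I_m) : option 'I_m :=
  [pick f | P f && [forall g, P g ==> (f <= g)]].

Definition forbidden (Phi : pcoloring) (j : 'I_m) (c : nat) : bool :=
  let u := (ends j).1 in let v := (ends j).2 in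
  [exists i : 'I_m, [&& i != j, Phi i == Some c &
     (incident i u || incident i v ||
      [exists x : V, exists y : V, edge_between i x y &&
         [exists a : 'I_m, exists b : 'I_m,
            [&& edge_between a u x, edge_between b v y,
                Phi a != None & Phi a == Phi b]]])]].

Variables (K : nat) (enumC : 'I_m -> nat -> seq {set 'I_m})
          (rule : pcoloring -> 'I_m -> option {set 'I_m}).

(* Returns None when the
   step is not performed (no uncolored edge, or f is not a valid position in
   S); otherwise returns (R_i, Phi_i), with R_i = None for "empty". *)
Definition step (Phi : pcoloring) (f : nat)
  : option (option (nat * nat) * pcoloring) :=
  match minpick (fun i => Phi i == None) with
  | None => None
  | Some j =>
    let S := [seq c <- iota 1 K | ~~ forbidden Phi j c] in
    if (0 < f) && (f <= size S) then
      let Phi1 : pcoloring :=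
        [ffun i => if i == j then Some (nth 0 S f.-1) else Phi i] in
      match rule Phi1 j with
      | None => Some (None, Phi1)
      | Some C =>
        let k := #|C| %/ 2 in
        let l := (index C (enumC j k)).+1 in
        let o2 := minpick (fun g => (g \in C) && edges_adj j g) in
        let o3 := [pick g | [&& g \in C, g != j, Some g != o2 &
                               if o2 is Some i2 then edges_adj g i2 else false]] in
        let Phi2 : pcoloring :=
          [ffun g => if [&& g \in C, Some g != o2 & Some g != o3]
                     then None else Phi1 g] in
        Some (Some (k, l), Phi2)
      end
    else None
  end.

Fixpoint run_from (Phi : pcoloring) (F : seq nat)
  : option (seq (option (nat * nat)) * pcoloring) :=
  match F with
  | [::] => Some ([::], Phi)
  | f :: F' =>
    match step Phi f with
    | None => None
    | Some (r, Phi') =>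
      match run_from Phi' F' with
      | None => None
      | Some (rs, Phi'') => Some (r :: rs, Phi'')
      end
    end
  end.

Definition run (F : seq nat) := run_from [ffun => None] F.

End Procedure.

Local Open Scope ring_scope.

Definition Kcol (R : realType) (gamma : R) (Delta : nat) : nat :=
  `|Num.ceil ((2 + gamma) * (Delta%:R - 1))|%N.

Definition input_ok (R : realType) (gamma : R) (Delta : nat) (F : seq nat) : bool :=
  all (fun f => (0 < f)%N && (f%:Z <= Num.ceil (gamma * (Delta%:R - 1)))) F.

(* Main.v *)
Require Import Defs.
From mathcomp Require Import all_boot all_order all_algebra.
From mathcomp Require Import reals.
From mathcomp Require Import zify.
Set Implicit Arguments. Unset Strict Implicit. Unset Printing Implicit Defensive.

Section Cyc.
Variables (V : finType) (m : nat) (ends : 'I_m -> V * V).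
Hypothesis Hs : simple_graph ends.
Notation eb := (edge_between ends).

Lemma eb_sym i x y : eb i x y = eb i y x.
Proof. by rewrite /edge_between orbC. Qed.

Lemma eb_uniq i i' x y : eb i x y -> eb i' x y -> i = i'.
Proof.
case: Hs => _ H; rewrite {1}/edge_between => /orP[/eqP e|/eqP e] h'; apply: H;
  rewrite e //= eb_sym //.
Qed.

Lemma eb_inc i x y : eb i x y -> incident ends i x && incident ends i y.
Proof.
by rewrite /edge_between /incident => /orP[/eqP->|/eqP->] /=; rewrite !eqxx ?orbT.
Qed.

Lemma adj_sym g h : edges_adj ends g h = edges_adj ends h g.
Proof.
rewrite /edges_adj eq_sym; congr (_ && _); apply/existsP/existsP=> [][x Hx];
  exists x; by rewrite andbC.
Qed.

Definition proper (Phi : pcoloring m) :=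
  forall g h, edges_adj ends g h -> Phi g != None -> Phi g != Phi h.

Variables (x0 : V) (e0 : 'I_m) (p : seq V) (n : nat).
Hypotheses (Hu : uniq p) (Hn : size p = n) (H3 : 3 <= n)
  (Hall : all (fun xy => [exists i, eb i xy.1 xy.2]) (zip p (rot 1 p))).

Definition P a := nth x0 p (a %% n).
Definition E a := odflt e0 [pick i | eb i (P a) (P a.+1)].

Lemma nth_rot1 a : a < n -> nth x0 (rot 1 p) a = P a.+1.
Proof.
move=> an; rewrite /P; case: p Hn an => [|x s] <- an; first by rewrite ltn0 in an.
rewrite rot1_cons nth_rcons /=; case: ltnP => h.
  by rewrite modn_small.
have -> : a = size s by move: an; rewrite /=; lia.
by rewrite modnn eqxx.
Qed.

Lemma memC g : (g \in cycle_edges ends p) = [exists a : 'I_n, eb g (P a) (P a.+1)].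
Proof.
rewrite inE; apply/(has_nthP (x0,x0))/existsP => [[a]|[a Ha]].
  rewrite size_zip size_rot minnn Hn => an; rewrite nth_zip ?size_rot //= => H.
  exists (Ordinal an) => /=; by rewrite -nth_rot1 // /P modn_small // Hn.
exists a; first by rewrite size_zip size_rot minnn Hn.
rewrite nth_zip ?size_rot //= nth_rot1 //.
by move: Ha; rewrite /P (modn_small (ltn_ord a)).
Qed.

Lemma Pmod a : P (a %% n) = P a.
Proof. by rewrite /P modn_mod. Qed.

Lemma PSmod a : P (a %% n).+1 = P a.+1.
Proof. by rewrite /P -[(a %% n).+1]addn1 -[a.+1]addn1 modnDml. Qed.

Lemma E_eb a : eb (E a) (P a) (P a.+1).
Proof.
rewrite /E; case: pickP => [//|H].
have an : a %% n < n by rewrite ltn_mod; lia.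
move/all_nthP: Hall => /(_ (x0,x0) (a %% n)).
rewrite size_zip size_rot minnn Hn nth_zip ?size_rot //= => /(_ an) /existsP[i Hi].
move: Hi; rewrite nth_rot1 // PSmod -/(P a) => Hi.
by move: (H i); rewrite Hi.
Qed.

Lemma E_in a : E a \in cycle_edges ends p.
Proof.
rewrite memC; apply/existsP.
have an : a %% n < n by rewrite ltn_mod; lia.
exists (Ordinal an) => /=; rewrite Pmod PSmod; exact: E_eb.
Qed.

Lemma C_E g : g \in cycle_edges ends p -> exists2 a, a < n & g = E a.
Proof.
rewrite memC => /existsP[a Ha]; exists a => //.
exact: eb_uniq Ha (E_eb a).
Qed.

Lemma P_inj a b : P a = P b -> a %% n = b %% n.
Proof.
rewrite /P => /eqP; rewrite nth_uniq ?Hn ?ltn_mod //; [by move/eqP| lia | lia].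
Qed.

Lemma E_mod a b : a %% n = b %% n -> E a = E b.
Proof.
move=> h.
have e1 : P a = P b by rewrite -(Pmod a) h Pmod.
have e2 : P a.+1 = P b.+1 by rewrite -(PSmod a) h PSmod.
by rewrite /E e1 e2.
Qed.

Lemma mod2_contra a : (a + 2 == a %[mod n]) -> False.
Proof.
by rewrite -{2}[a]addn0 eqn_modDl mod0n modn_small.
Qed.

Lemma E_inj a b : E a = E b -> a %% n = b %% n.
Proof.
move=> h; have := E_eb a; rewrite h {h}; have := E_eb b.
rewrite /edge_between => /orP[/eqP e|/eqP e] /orP[/eqP e'|/eqP e'];
  rewrite e in e'; case: e' => /P_inj h1 /P_inj h2 //.
all: exfalso; apply: (@mod2_contra a); apply/eqP.
  all: first [ by rewrite -h2 -[b.+1]addn1 -(modnDml b 1) h1 modnDml addn1 addn2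
             | by rewrite -h1 -[b.+1]addn1 -(modnDml b 1) h2 modnDml addn1 addn2 ].
Qed.

Lemma E_adj a : edges_adj ends (E a) (E a.+1).
Proof.
rewrite /edges_adj; apply/andP; split.
  apply/eqP => /E_inj /eqP.
  rewrite -[a.+1]addn1 -{1}[a]addn0 eqn_modDl mod0n modn_small //; lia.
apply/existsP; exists (P a.+1).
by have /andP[_ ->] := eb_inc (E_eb a); have /andP[-> _] := eb_inc (E_eb a.+1).
Qed.

Lemma card_C : #|cycle_edges ends p| = n.
Proof.
have -> : cycle_edges ends p = [set E (val a) | a : 'I_n].
  apply/setP => g; apply/idP/imsetP => [/C_E [a an ->]|[a _ ->]].
    by exists (Ordinal an).
  exact: E_in.
rewrite card_imset ?card_ord // => a b /E_inj.
by rewrite !modn_small ?ltn_ord // => /ord_inj.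
Qed.

Lemma minpickP (Q : pred 'I_m) f : minpick Q = Some f -> Q f.
Proof. by rewrite /minpick; case: pickP => // f' /andP[H _] [<-]. Qed.

Lemma minpick_ex (Q : pred 'I_m) g : Q g -> exists f, minpick Q = Some f.
Proof.
move=> Qg; rewrite /minpick; case: pickP => [f _|H]; first by exists f.
case: (arg_minnP val Qg) => f Qf Hf.
by move: (H f); rewrite Qf /=; move/negP; case; apply/forallP => h; apply/implyP; exact: Hf.
Qed.

Lemma E_neq a k : 0 < k < n -> E (a + k) != E a.
Proof.
move=> /andP[k0 kn]; apply/eqP => /E_inj /eqP.
rewrite -{2}[a]addn0 eqn_modDl mod0n modn_small //; move/eqP; lia.
Qed.

Section Col.
Variable Phi1 : pcoloring m.
Hypotheses (Hp1 : proper Phi1) (Hb1 : bichromatic Phi1 (cycle_edges ends p)).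

Let col a := Phi1 (E a).

Lemma col_some a : col a != None.
Proof. by rewrite /col; case: Hb1 => c1 [c2 H]; case: (H _ (E_in a)) => ->. Qed.

Lemma col_ne a : col a != col a.+1.
Proof. exact: Hp1 (E_adj a) (col_some a). Qed.

Lemma col_2 a : col a.+2 = col a.
Proof.
case: Hb1 => c1 [c2 H].
have := col_ne a; have := col_ne a.+1; rewrite /col.
by case: (H _ (E_in a)) => ->; case: (H _ (E_in a.+1)) => ->;
  case: (H _ (E_in a.+2)) => -> //; rewrite ?eqxx.
Qed.

Lemma col_2t a t : col (a + 2 * t) = col a.
Proof.
elim: t a => [|t IH] a; first by rewrite addn0.
by rewrite mulnS addnA IH addn2 col_2.
Qed.

Lemma even_n : ~~ odd n.
Proof.
apply/negP => on.
have e : col (0 + n) = col 0 by rewrite /col (@E_mod (0 + n) 0) // add0n modnn mod0n.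
have : n = 1 + 2 * n./2 by rewrite -{1}(odd_double_half n) on -muln2 mulnC.
move=> en; move: e; rewrite {1}en addnA col_2t => e.
by have := col_ne 0; rewrite e eqxx.
Qed.

End Col.


Lemma two_vals (x y z u v : option nat) :
  (x = u \/ x = v) -> (y = u \/ y = v) -> (z = u \/ z = v) -> x <> y -> z = x \/ z = y.
Proof. by move=> [->|->] [->|->] [->|->]; auto. Qed.

Lemma three_vals (x y z z' w : option nat) :
  x <> y -> (z = x \/ z = y) -> (z' = x \/ z' = y) -> (w = x \/ w = y) ->
  w <> z -> w <> z' -> z = z'.
Proof. by move=> nxy [->|->] [->|->] [->|->]. Qed.

Notation C := (cycle_edges ends p).

Lemma agree (Phi Phi' : pcoloring m) (j : 'I_m) :
  proper Phi -> proper Phi' -> bichromatic Phi C -> bichromatic Phi' C -> j \in C ->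
  let o2 := minpick (fun g => (g \in C) && edges_adj ends j g) in
  let o3 := [pick g | [&& g \in C, g != j, Some g != o2 &
                        if o2 is Some i2 then edges_adj ends g i2 else false]] in
  (forall g, Some g = o2 \/ Some g = o3 -> Phi g = Phi' g) ->
  forall g, g \in C -> Phi g = Phi' g.
Proof.
move=> Hp Hp' Hb Hb' jC o2 o3 Hag.
have [b0 b0n ej] := C_E jC.
have [g2 o2e] : exists g2, o2 = Some g2.
  apply: (@minpick_ex _ (E b0.+1)); rewrite E_in ej; exact: E_adj.
have /andP[g2C _] := minpickP o2e.
have [a0 a0n eg2] := C_E g2C.
have n1 : (n.-1).+1 = n by lia.
have adjm : edges_adj ends (E (a0 + n.-1)) (E a0).
  rewrite (@E_mod a0 (a0 + n.-1).+1) ?E_adj //.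
  by rewrite -addnS n1 modnDr.
have adjp : edges_adj ends (E a0.+1) (E a0) by rewrite adj_sym E_adj.
have nm : E (a0 + n.-1) != E a0 by rewrite E_neq //; apply/andP; split; lia.
have np : E a0.+1 != E a0 by rewrite -addn1 E_neq //; apply/andP; split; lia.
have npm : E a0.+1 != E (a0 + n.-1).
  have -> : a0 + n.-1 = a0.+1 + (n - 2) by lia.
  rewrite eq_sym E_neq //; apply/andP; split; lia.
have [g3 o3e] : exists g3, o3 = Some g3.
  rewrite /o3; case: pickP => [g3 _|H]; first by exists g3.
  case: (eqVneq (E a0.+1) j) => hj.
  - move: (H (E (a0 + n.-1))); rewrite E_in o2e eg2 adjm /= andbT.
    have -> : E (a0 + n.-1) != j by rewrite -hj eq_sym.
    by rewrite /= nm.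
  - by move: (H (E a0.+1)); rewrite E_in o2e eg2 adjp hj /= np.
have /and4P[g3C _ g3n2 g3adj] : [&& g3 \in C, g3 != j, Some g3 != o2 &
                        if o2 is Some i2 then edges_adj ends g3 i2 else false].
  by move: o3e; rewrite /o3; case: pickP => // g3' H [<-].
rewrite o2e in g3adj.
have c2 : Phi g2 != None by case: Hb => c1 [c2 H]; case: (H _ g2C) => ->.
have n23 : Phi g2 <> Phi g3.
  by apply/eqP; apply: Hp c2; rewrite adj_sym.
have A2 := Hag g2 (or_introl (esym o2e)).
have A3 := Hag g3 (or_intror (esym o3e)).
have inab (Q : pcoloring m) : bichromatic Q C -> Q g2 = Phi g2 -> Q g3 = Phi g3 ->
    forall g, g \in C -> Q g = Phi g2 \/ Q g = Phi g3.
  move=> [c1 [c2' H]] e2 e3 g gC; rewrite -e2 -e3.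
  by apply: two_vals (H _ g2C) (H _ g3C) (H _ gC) _; rewrite e2 e3.
have Hi := inab Phi Hb erefl erefl.
have Hi' := inab Phi' Hb' (esym A2) (esym A3).
have step t : Phi (E (a0 + t)) = Phi' (E (a0 + t)).
  elim: t => [|t IH]; first by rewrite addn0 -eg2.
  rewrite addnS.
  have ne1 : Phi (E (a0 + t).+1) <> Phi (E (a0 + t)).
    by move=> h; have := col_ne Hp Hb (a0 + t); rewrite h eqxx.
  have ne2 : Phi' (E (a0 + t).+1) <> Phi (E (a0 + t)).
    by move=> h; have := col_ne Hp' Hb' (a0 + t); rewrite h IH eqxx.
  exact: three_vals n23 (Hi _ (E_in _)) (Hi' _ (E_in _)) (Hi _ (E_in _))
    (fun h => ne1 (esym h)) (fun h => ne2 (esym h)).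
move=> g /C_E[b bn ->].
have := step (n - a0 + b).
have e : a0 + (n - a0 + b) = n + b by rewrite addnA subnKC // ltnW.
by rewrite e (@E_mod (n + b) b) // modnDl.
Qed.

Lemma no4 (Phi Phi1 : pcoloring m) (j : 'I_m) (c : nat) :
  n = 4 -> proper Phi1 -> bichromatic Phi1 C -> j \in C -> Phi1 j = Some c ->
  (forall g, g != j -> Phi g = Phi1 g) -> forbidden ends Phi j c.
Proof.
move=> n4 Hp Hb jC Hj Hoth.
have [a an ej] := C_E jC.
have ne k : 0 < k < 4 -> E (a + k) != j by move=> hk; rewrite ej E_neq // n4.
have Pa4 : P a.+4 = P a by rewrite -(Pmod a.+4) -(Pmod a) -addn4 n4 modnDr.
have c2 : Phi (E a.+2) = Some c.
  rewrite Hoth; last by rewrite -addn2 ne.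
  by rewrite (col_2 Hp Hb) -ej.
have e13 : Phi (E a.+3) = Phi (E a.+1).
  rewrite !Hoth; [|by rewrite -addn1 ne|by rewrite -addn3 ne].
  exact: (col_2 Hp Hb a.+1).
have c3 : Phi (E a.+3) != None.
  rewrite Hoth; last by rewrite -addn3 ne.
  exact: (col_some Hb).
have n2 : E a.+2 != j by rewrite -addn2 ne.
have h3 : eb (E a.+3) (P a) (P a.+3) by rewrite eb_sym -Pa4; exact: E_eb.
have := E_eb a; rewrite -ej /edge_between => /orP[/eqP e|/eqP e];
  apply/existsP; exists (E a.+2); rewrite n2 c2 eqxx /=; apply/orP; right;
  rewrite e /=.
- apply/existsP; exists (P a.+3); apply/existsP; exists (P a.+2).
  rewrite eb_sym E_eb /=; apply/existsP; exists (E a.+3); apply/existsP; exists (E a.+1).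
  by rewrite c3 e13 eqxx h3 E_eb.
- apply/existsP; exists (P a.+2); apply/existsP; exists (P a.+3).
  rewrite E_eb /=; apply/existsP; exists (E a.+1); apply/existsP; exists (E a.+3).
  by rewrite -e13 c3 eqxx E_eb h3.
Qed.
End Cyc.

Section Wrap.
Variables (V : finType) (m : nat) (ends : 'I_m -> V * V).
Hypothesis Hs : simple_graph ends.

Lemma cyc_card C n (Phi1 : pcoloring m) j : is_cycle ends C n -> j \in C ->
  proper ends Phi1 -> bichromatic Phi1 C -> [/\ #|C| = n, ~~ odd n & 3 <= n].
Proof.
case=> p [Hu Hn H3 Hall ->] jC Hp Hb.
case: p Hu Hn Hall Hb jC => [|x0 s] Hu Hn Hall Hb jC; first by rewrite -Hn in H3.
split => //; [exact: (card_C Hs x0 j Hu Hn H3 Hall) | exact: (even_n x0 j Hu Hn H3 Hall Hp Hb)].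
Qed.

Lemma cyc_no4 C (Phi Phi1 : pcoloring m) j c : is_cycle ends C 4 -> j \in C ->
  proper ends Phi1 -> bichromatic Phi1 C -> Phi1 j = Some c ->
  (forall g, g != j -> Phi g = Phi1 g) -> forbidden ends Phi j c.
Proof.
case=> p [Hu Hn H3 Hall ->] jC Hp Hb.
case: p Hu Hn Hall Hb jC => [|x0 s] Hu Hn Hall Hb jC; first by rewrite -Hn in H3.
exact: (no4 Hs x0 j Hu Hn H3 Hall erefl Hp Hb jC).
Qed.

Lemma cyc_agree C n (Phi Phi' : pcoloring m) (j : 'I_m) :
  is_cycle ends C n ->
  proper ends Phi -> proper ends Phi' -> bichromatic Phi C -> bichromatic Phi' C -> j \in C ->
  let o2 := minpick (fun g => (g \in C) && edges_adj ends j g) in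
  let o3 := [pick g | [&& g \in C, g != j, Some g != o2 &
                        if o2 is Some i2 then edges_adj ends g i2 else false]] in
  (forall g, Some g = o2 \/ Some g = o3 -> Phi g = Phi' g) ->
  forall g, g \in C -> Phi g = Phi' g.
Proof.
case=> p [Hu Hn H3 Hall ->] Hp Hp' Hb Hb' jC.
case: p Hu Hn Hall Hb Hb' jC => [|x0 s] Hu Hn Hall Hb Hb' jC; first by rewrite -Hn in H3.
exact: (agree Hs x0 j Hu Hn H3 Hall Hp Hp' Hb Hb' jC).
Qed.

End Wrap.

Section Main.
Variables (V : finType) (m : nat) (ends : 'I_m -> V * V).
Variables (K : nat) (enumC : 'I_m -> nat -> seq {set 'I_m})
          (rule : pcoloring m -> 'I_m -> option {set 'I_m}).
Hypotheses (Hs : simple_graph ends) (He : valid_enum ends enumC) (Hr : valid_rule ends rule).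

Lemma eq_minpick (P Q : pred 'I_m) : P =1 Q -> minpick P = minpick Q.
Proof.
move=> h; rewrite /minpick; apply: eq_pick => x; rewrite h; congr (_ && _).
by apply: eq_forallb => y; rewrite h.
Qed.

Lemma phi1_proper (Phi : pcoloring m) j c : proper ends Phi -> ~~ forbidden ends Phi j c ->
  proper ends [ffun i => if i == j then Some c else Phi i].
Proof.
move=> Hp Hf.
have key h : edges_adj ends j h -> Phi h != Some c.
  move=> /andP[nh /existsP[x /andP[ij ih]]]; apply/negP => /eqP eh.
  move/negP: Hf; apply; apply/existsP; exists h; rewrite eq_sym nh eh eqxx /=.
  by move: ij ih; rewrite {1}/incident => /orP[]/eqP <- ih; rewrite ih ?orbT.
move=> g h adj; rewrite !ffunE.
case: (eqVneq g j) => [eg|ng]; case: (eqVneq h j) => [eh|nh].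
- by move: adj; rewrite /edges_adj eg eh eqxx.
- by move=> _; rewrite eq_sym; apply: key; rewrite -eg.
- by move=> _; apply: key; rewrite adj_sym -eh.
- exact: Hp.
Qed.

Lemma uncolor_proper (Phi : pcoloring m) (Q : pred 'I_m) : proper ends Phi ->
  proper ends [ffun g => if Q g then None else Phi g].
Proof.
move=> Hp g h adj; rewrite !ffunE; case: (Q g) => //; case: (Q h); last exact: Hp.
by move=> h0.
Qed.


Definition P1 (Phi : pcoloring m) j c : pcoloring m :=
  [ffun i => if i == j then Some c else Phi i].

Lemma C_enum (Phi : pcoloring m) j c C : proper ends Phi -> ~~ forbidden ends Phi j c ->
  rule (P1 Phi j c) j = Some C -> C \in enumC j (#|C| %/ 2).
Proof.
move=> Hp Hf eR.
have Pp := phi1_proper Hp Hf.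
case: ((Hr (P1 Phi j c) j).1 C eR) => jC [n cn] bc.
have [cardC ev n3] := cyc_card Hs cn jC Pp bc.
have n4 : n != 4.
  apply/eqP => n4; rewrite n4 in cn; apply: (negP Hf).
  apply: (cyc_no4 Hs cn jC Pp bc); first by rewrite ffunE eqxx.
  by move=> g ng; rewrite ffunE (negbTE ng).
have e2 : 2 * (n %/ 2) = n.
  by rewrite divn2 -{2}(odd_double_half n) (negbTE ev) add0n -muln2 mulnC.
have k3 : 3 <= n %/ 2.
  move: e2 n3 n4; set k := n %/ 2 => e2 n3 /eqP n4; lia.
rewrite cardC; apply: ((He j k3).2 C).2.
by split => //; rewrite e2.
Qed.

Lemma nth_ok (Phi : pcoloring m) j f :
  let S := [seq c <- iota 1 K | ~~ forbidden ends Phi j c] in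
  0 < f -> f <= size S -> ~~ forbidden ends Phi j (nth 0 S f.-1).
Proof.
move=> S f0 fS; have : nth 0 S f.-1 \in S by apply: mem_nth; move: f0 fS; case: f.
by rewrite mem_filter => /andP[].
Qed.

Lemma nth_inj (Phi : pcoloring m) j f f' :
  let S := [seq c <- iota 1 K | ~~ forbidden ends Phi j c] in
  0 < f -> f <= size S -> 0 < f' -> f' <= size S -> nth 0 S f.-1 = nth 0 S f'.-1 -> f = f'.
Proof.
move=> S f0 fS f0' fS' /eqP; rewrite nth_uniq.
- move/eqP; clear fS fS'; case: f f0 => [|a] //; case: f' f0' => [|b] // _ _ /= -> //.
- by move: f0 fS; case: f.
- by move: f0' fS'; case: f'.
exact/filter_uniq/iota_uniq.
Qed.

Lemma step_pair (Phi Phi' : pcoloring m) f f' r Psi Psi' :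
  proper ends Phi -> proper ends Phi' -> (forall g, (Phi g == None) = (Phi' g == None)) ->
  step ends K enumC rule Phi f = Some (r, Psi) ->
  step ends K enumC rule Phi' f' = Some (r, Psi') ->
  [/\ proper ends Psi, proper ends Psi',
      (forall g, (Psi g == None) = (Psi' g == None)) &
      (Psi = Psi' -> Phi = Phi' /\ f = f')].
Proof.
move=> Hp Hp' Hu.
rewrite /step (@eq_minpick (fun i => Phi' i == None) (fun i => Phi i == None));
  last by move=> g; rewrite Hu.
case ej: (minpick _) => [j|] //.
have jN : Phi j = None by apply/eqP; exact: minpickP ej.
have jN' : Phi' j = None by apply/eqP; rewrite -Hu; exact: minpickP ej.
case: ifP => // /andP[f0 fS]; case: ifP => // /andP[f0' fS'].
have Hf := nth_ok f0 fS; have Hf' := nth_ok f0' fS'.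
move: Hf Hf'.
set c := nth 0 _ f.-1; set c' := nth 0 _ f'.-1 => Hf Hf'.
rewrite -[ [ffun i => if i == j then Some c else Phi i] ]/(P1 Phi j c).
rewrite -[ [ffun i => if i == j then Some c' else Phi' i] ]/(P1 Phi' j c').
have Pp : proper ends (P1 Phi j c) := phi1_proper Hp Hf.
have Pp' : proper ends (P1 Phi' j c') := phi1_proper Hp' Hf'.
have off (Q : pcoloring m) d g : g != j -> P1 Q j d g = Q g.
  by move=> ng; rewrite /P1 ffunE (negbTE ng).
have unc1 (Q : pcoloring m) d g : (P1 Q j d g == None) = (g != j) && (Q g == None).
  by rewrite /P1 ffunE; case: (eqVneq g j).
have fin (E : P1 Phi j c = P1 Phi' j c') : Phi = Phi' /\ f = f'.
  have ePhi : Phi = Phi'.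
    apply/ffunP => g; case: (eqVneq g j) => [->|ng]; first by rewrite jN jN'.
    by rewrite -(off Phi c g ng) -(off Phi' c' g ng) E.
  split => //; subst Phi'.
  have ecc : c = c' by have := congr1 (fun F : pcoloring m => F j) E; rewrite /P1 !ffunE eqxx; case.
  exact: nth_inj f0 fS f0' fS' ecc.
case eR: (rule (P1 Phi j c) j) => [C|]; case eR': (rule (P1 Phi' j c') j) => [C'|];
  [| by move=> [<- _] [] | by move=> [<- _] [] |].
- case=> <- <- [] ek el <-.
  have CE := C_enum Hp Hf eR; have CE' := C_enum Hp' Hf' eR'.
  rewrite ek in CE' el.
  have eCC : C' = C by rewrite -(nth_index C CE') el (nth_index C CE).
  subst C'.
  case: ((Hr _ j).1 C eR) => jC [n cn] bc; case: ((Hr _ j).1 C eR') => _ [n' cn'] bc'.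
  set o2 := minpick _.
  set o3 := [pick g | _].
  split.
  + exact: uncolor_proper Pp.
  + exact: uncolor_proper Pp'.
  + move=> g; rewrite !ffunE; case: ifP => // _; case: (eqVneq g j) => // _; exact: Hu.
  + move=> E; apply: fin; apply/ffunP => g.
    have Eg h : ~~ [&& h \in C, Some h != o2 & Some h != o3] -> P1 Phi j c h = P1 Phi' j c' h.
      move=> nh; have := congr1 (fun F : pcoloring m => F h) E.
      by rewrite !ffunE (negbTE nh).
    case: (boolP (g \in C)) => gC; last by apply: Eg; rewrite (negbTE gC).
    apply: (cyc_agree Hs cn Pp Pp' bc bc' jC) => // g0 H0; apply: Eg.
    by case: H0 => H0; rewrite /o3 /o2 -H0 eqxx /= ?andbF.
- case=> <- <- [<-]; split => //.
  by move=> g; rewrite !unc1 Hu.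
Qed.

Lemma run_inj (F1 : seq nat) : forall F2 (Phi Phi' : pcoloring m) out,
  proper ends Phi -> proper ends Phi' -> (forall g, (Phi g == None) = (Phi' g == None)) ->
  run_from ends K enumC rule Phi F1 = Some out ->
  run_from ends K enumC rule Phi' F2 = Some out -> Phi = Phi' /\ F1 = F2.
Proof.
elim: F1 => [|f F1 IH] [|f' F2] Phi Phi' out Hp Hp' Hu //=.
- by move=> <- [->].
- by move=> <-; case: (step _ _ _ _ _ _) => // [[r Q]]; case: (run_from _ _ _ _ _ _) => // [[]].
- case: (step _ _ _ _ _ _) => // [[r Q]]; case: (run_from _ _ _ _ _ _) => // [[rs Q2]] <-.
  by case.
- case es: (step _ _ _ _ Phi f) => // [[r Q]]; case er: (run_from _ _ _ _ Q F1) => // [[rs Q2]] <-.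
  case es': (step _ _ _ _ Phi' f') => // [[r' Q']]; case er': (run_from _ _ _ _ Q' F2) => // [[rs' Q2']].
  case=> er2 ers eQ; subst r' rs' Q2'.
  have [PQ PQ' UQ inj] := step_pair Hp Hp' Hu es es'.
  have [eQQ eF] := IH _ _ _ _ PQ PQ' UQ er er'.
  have [-> ->] := inj eQQ.
  by rewrite eF.
Qed.
End Main.

Unset Implicit Arguments.

Theorem lemma2 (R : realType) (V : finType) (m : nat) (ends : 'I_m -> V * V)
  (gamma : R) (enumC : 'I_m -> nat -> seq {set 'I_m})
  (rule : pcoloring m -> 'I_m -> option {set 'I_m}) :
  simple_graph ends -> (1 < gamma)%R ->
  valid_enum ends enumC -> valid_rule ends rule ->
  forall (i : nat) (F1 F2 : seq nat),
    size F1 = i -> size F2 = i ->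
    input_ok gamma (max_degree ends) F1 -> input_ok gamma (max_degree ends) F2 ->
    forall out,
      run ends (Kcol gamma (max_degree ends)) enumC rule F1 = Some out ->
      run ends (Kcol gamma (max_degree ends)) enumC rule F2 = Some out ->
      F1 = F2.
Proof.
move=> Hs _ He Hr i F1 F2 _ _ _ _ out r1 r2.
have Hp : proper ends ([ffun => None] : pcoloring m) by move=> g h _; rewrite ffunE.
exact: (run_inj Hs He Hr Hp Hp (fun _ => erefl) r1 r2).2.
Qed.
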